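(* Let $k$ be an infinite field of characteristic $0$, $X_1\subseteq X_2$, $Y_1\subseteq Y_2$ finite sets, $W_i=W(X_i,Y_i)=(L(X_i),A(X_i)Y_i)$ ($i=1,2$), and $H$ a representation. If $(T_1,T_2)$ with $T_1\subseteq L(X_2)$, $T_2\subseteq A(X_2)Y_2$ is $H$-closed in $W_2$, then $(T_1\cap L(X_1),\,T_2\cap A(X_1)Y_1)$ is $H$-closed in $W_1$.
   Context: A representation $H=(L,V)$ is a Lie algebra $L$ over $k$ with an $L$-module $V$; homomorphisms $(\varphi,\psi)$: Lie homomorphism $\varphi$, linear $\psi$, $\varphi(l)\circ\psi(v)=\psi(l\circ v)$. $L(X)$ free Lie algebra, $A(X)$ free associative algebra with unit, $A(X)Y$ free $A(X)$-module with basis $Y$; $W_1$ is regarded as a subrepresentation of $W_2$. For $W=W(X,Y)$ and $S_1\subseteq L(X)$, $S_2\subseteq A(X)Y$: $(S_1,S_2)'_{W,H}$ is the set of homomorphisms $(\varphi,\psi):W\to H$ with $S_1\subseteq\ker\varphi$, $S_2\subseteq\ker\psi$, $(S_1,S_2)''_{W,H}$ is the pair (intersection of these $\ker\varphi$, intersection of these $\ker\psi$), and $(S_1,S_2)$ is $H$-closed in $W$ if $(S_1,S_2)''_{W,H}=(S_1,S_2)$. *)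

(* Defs.v *)
From HB Require Import structures.
From mathcomp Require Import all_boot all_order all_algebra.
From mathcomp Require Import finmap.
From mathcomp Require Import monalg.

Set Implicit Arguments.
Unset Strict Implicit.
Unset Printing Implicit Defensive.

Import GRing.Theory.
Local Open Scope ring_scope.

Record lieAlgebra (k : fieldType) := LieAlgebra {
  lie_car :> lmodType k;
  lie_br : lie_car -> lie_car -> lie_car;
  lie_brDl : forall a b c, lie_br (a + b) c = lie_br a c + lie_br b c;
  lie_brDr : forall a b c, lie_br a (b + c) = lie_br a b + lie_br a c;
  lie_brZl : forall (t : k) a b, lie_br (t *: a) b = t *: lie_br a b;
  lie_brZr : forall (t : k) a b, lie_br a (t *: b) = t *: lie_br a b;
  lie_br_alt : forall a, lie_br a a = 0;
  lie_jacobi : forall a b c,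
    lie_br a (lie_br b c) + lie_br b (lie_br c a) + lie_br c (lie_br a b) = 0
}.

Record representation (k : fieldType) := Representation {
  rep_L : lieAlgebra k;
  rep_V : lmodType k;
  rep_act : rep_L -> rep_V -> rep_V;
  rep_actDl : forall l m v, rep_act (l + m) v = rep_act l v + rep_act m v;
  rep_actDr : forall l v w, rep_act l (v + w) = rep_act l v + rep_act l w;
  rep_actZl : forall (t : k) l v, rep_act (t *: l) v = t *: rep_act l v;
  rep_actZr : forall (t : k) l v, rep_act l (t *: v) = t *: rep_act l v;
  rep_act_br : forall l m v,
    rep_act (lie_br l m) v = rep_act l (rep_act m v) - rep_act m (rep_act l v)
}.

(* A(X): free associative algebra with unit (noncommutative polynomials). *)
Definition FreeAlg (k : fieldType) (X : finType) := {malg k[{fmonom X}]}.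

(* A(X)Y: free A(X)-module with (finite) basis Y, i.e. A(X)^Y. *)
Definition FreeMod (k : fieldType) (X Y : finType) := {ffun Y -> FreeAlg k X}.

Section Free.
Variables (k : fieldType) (X Y : finType).
Local Notation A := (FreeAlg k X).
Local Notation M := (FreeMod k X Y).

Definition comm (a b : A) : A := a * b - b * a.

Definition gen (x : X) : A := << fmu x >>.

(* the A(X)-module action on A(X)Y (restricted to L(X) this is the
   L(X)-module structure of W(X,Y)) *)
Definition mact (a : A) (v : M) : M := [ffun y => a * v y].

(* L(S) for S a subset of X: the Lie subalgebra of A(X) generated by S,
   i.e. the free Lie algebra on S realized inside A(S) subset A(X). *)
Inductive inLie (S : {set X}) : A -> Prop :=
  | inLie_gen x : x \in S -> inLie S (gen x)
  | inLie_add a b : inLie S a -> inLie S b -> inLie S (a + b)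
  | inLie_scale (t : k) a : inLie S a -> inLie S (t *: a)
  | inLie_comm a b : inLie S a -> inLie S b -> inLie S (comm a b).

Definition inAlg (S : {set X}) (a : A) : Prop :=
  forall m : {fmonom X}, m \in msupp a -> all (fun x => x \in S) (fmonom_val m).

Definition inMod (S : {set X}) (T : {set Y}) (v : M) : Prop :=
  forall y, (y \in T -> inAlg S (v y)) /\ (y \notin T -> v y = 0).

(* Homomorphisms are given by maps on A(X), A(X)Y whose behaviour only *)
(* matters on L(S), A(S)T.                                            *)

Variable H : representation k.

Definition is_hom (S : {set X}) (T : {set Y})
    (phi : A -> rep_L H) (psi : M -> rep_V H) : Prop :=
  (forall a b, inLie S a -> inLie S b -> phi (a + b) = phi a + phi b) /\
  (forall (t : k) a, inLie S a -> phi (t *: a) = t *: phi a) /\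
  (forall a b, inLie S a -> inLie S b ->
     phi (comm a b) = lie_br (phi a) (phi b)) /\
  (forall v w, inMod S T v -> inMod S T w -> psi (v + w) = psi v + psi w) /\
  (forall (t : k) v, inMod S T v -> psi (t *: v) = t *: psi v) /\
  (forall l v, inLie S l -> inMod S T v ->
     rep_act (phi l) (psi v) = psi (mact l v)).

Definition in_prime (S : {set X}) (T : {set Y})
    (S1 : A -> Prop) (S2 : M -> Prop) phi psi : Prop :=
  is_hom S T phi psi /\ (forall a, S1 a -> phi a = 0) /\ (forall v, S2 v -> psi v = 0).

Definition dprimeL (S : {set X}) (T : {set Y})
    (S1 : A -> Prop) (S2 : M -> Prop) (a : A) : Prop :=
  inLie S a /\ forall phi psi, in_prime S T S1 S2 phi psi -> phi a = 0.

Definition dprimeM (S : {set X}) (T : {set Y})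
    (S1 : A -> Prop) (S2 : M -> Prop) (v : M) : Prop :=
  inMod S T v /\ forall phi psi, in_prime S T S1 S2 phi psi -> psi v = 0.

Definition H_closed (S : {set X}) (T : {set Y})
    (S1 : A -> Prop) (S2 : M -> Prop) : Prop :=
  (forall a, dprimeL S T S1 S2 a <-> S1 a) /\
  (forall v, dprimeM S T S1 S2 v <-> S2 v).

End Free.

(* Main.v *)
Require Import Defs.
From HB Require Import structures.
From mathcomp Require Import all_boot all_order all_algebra.
From mathcomp Require Import finmap.
From mathcomp Require Import monalg.

Lemma inLie_T (k : fieldType) (X : finType) (S : {set X}) (a : FreeAlg k X) :
  inLie S a -> inLie [set: X] a.
Proof.
elim=> [x _|a1 b1 _ h1 _ h2|t a1 _ h1|a1 b1 _ h1 _ h2].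
- by apply: inLie_gen; rewrite in_setT.
- exact: inLie_add.
- exact: inLie_scale.
- exact: inLie_comm.
Qed.

Lemma inMod_T (k : fieldType) (X Y : finType) (S : {set X}) (T : {set Y})
  (v : FreeMod k X Y) : inMod S T v -> inMod [set: X] [set: Y] v.
Proof.
move=> _ y; split.
- move=> _ m _; apply/allP => x _; exact: in_setT.
- by rewrite in_setT.
Qed.

Lemma is_hom_T (k : fieldType) (X Y : finType) (H : representation k)
  (S : {set X}) (T : {set Y}) phi psi :
  is_hom (H:=H) [set: X] [set: Y] phi psi -> is_hom (H:=H) S T phi psi.
Proof.
move=> [h1 [h2 [h3 [h4 [h5 h6]]]]].
split; [|split; [|split; [|split; [|split]]]].
- by move=> a b ha hb; apply: h1; apply: inLie_T; eassumption.
- by move=> t a ha; apply: h2; apply: inLie_T; eassumption.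
- by move=> a b ha hb; apply: h3; apply: inLie_T; eassumption.
- by move=> v w hv hw; apply: h4; apply: inMod_T; eassumption.
- by move=> t v hv; apply: h5; apply: inMod_T; eassumption.
- by move=> l v hl hv; apply: h6; [apply: inLie_T | apply: inMod_T]; eassumption.
Qed.

Theorem proposition2 (k : fieldType)
    (k_char0 : ([pchar k] =i pred0)%R)
    (k_infinite : forall s : seq k, exists t : k, t \notin s)
    (X2 Y2 : finType) (X1 : {set X2}) (Y1 : {set Y2})
    (H : representation k)
    (T1 : FreeAlg k X2 -> Prop) (T2 : FreeMod k X2 Y2 -> Prop)
    (hT1 : forall a, T1 a -> inLie [set: X2] a)
    (hT2 : forall v, T2 v -> inMod [set: X2] [set: Y2] v)
    (hclosed : H_closed H [set: X2] [set: Y2] T1 T2) :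
  H_closed H X1 Y1
    (fun a => T1 a /\ inLie X1 a)
    (fun v => T2 v /\ inMod X1 Y1 v).
Proof.
case: hclosed => hL hM; split.
- move=> a; split.
  + move=> [ha hall]; split; last by [].
    apply/hL; split; first by apply: inLie_T; exact: ha.
    move=> phi psi [hh [z1 z2]]; apply: hall; split; first by apply: is_hom_T; exact: hh.
    split; first by move=> b [hb _]; apply: z1.
    by move=> v [hv _]; apply: z2.
  + move=> [h1 h2]; split; first by [].
    by move=> phi psi [_ [z1 _]]; apply: z1.
- move=> v; split.
  + move=> [hv hall]; split; last by [].
    apply/hM; split; first by apply: inMod_T; exact: hv.
    move=> phi psi [hh [z1 z2]]; apply: hall; split; first by apply: is_hom_T; exact: hh.
    split; first by move=> b [hb _]; apply: z1.
    by move=> w [hw _]; apply: z2.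
  + move=> [h1 h2]; split; first by [].
    by move=> phi psi [_ [_ z2]]; apply: z2.
Qed.
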